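(* Let $\psi:X\to Y$ be a function between two finite metric spaces such that $\psi(X)$ is $D$-dense in $Y$ for some $D\geq0$. Let $B\subseteq Y$ be nonempty with $|B|\leq|Y|/2$ and $1-N_Y(D)\frac{|\partial_D(B)|}{|B|}\geq\frac12$. Then either $A=\psi^{-1}(B)$ or $A=\psi^{-1}(Y\setminus B)$ satisfies $|A|\leq|X|/2$ and $|A|\geq\frac{1}{2N_Y(D)}|B|$.
   Context: A subset $S\subseteq Y$ is $D$-dense if every point of $Y$ is within distance $D$ of a point of $S$. $N_Y(D)=\sup_{y\in Y}|B(y,D)|$ (closed balls). $\partial_D(B)=\{y\in Y\setminus B: d(y,B)\leq D\}$ is the outer $D$-boundary. *)

(* Defs.v *)
From HB Require Import structures.
From mathcomp Require Import all_boot all_order all_algebra.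
Set Implicit Arguments. Unset Strict Implicit. Unset Printing Implicit Defensive.
Import Order.TTheory GRing.Theory Num.Theory.
Local Open Scope ring_scope.

Definition is_metric (R : realFieldType) (T : finType) (d : T -> T -> R) : Prop :=
  [/\ forall x y, 0 <= d x y,
      forall x y, d x y = 0 <-> x = y,
      forall x y, d x y = d y x &
      forall x y z, d x z <= d x y + d y z].

Definition cball (R : realFieldType) (T : finType) (d : T -> T -> R) (y : T) (D : R)
  : {set T} := [set z | d y z <= D].

(* N_Y(D) = sup_y |B(y,D)| (a max, the space being finite) *)
Definition NY (R : realFieldType) (T : finType) (d : T -> T -> R) (D : R) : nat :=
  (\max_(y : T) #|cball d y D|)%N.

Definition dense_in (R : realFieldType) (T : finType) (d : T -> T -> R) (D : R)
  (S : {set T}) : Prop :=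
  forall y, exists2 s, s \in S & d y s <= D.

Definition oboundary (R : realFieldType) (T : finType) (d : T -> T -> R) (D : R)
  (B : {set T}) : {set T} :=
  [set y | (y \notin B) && [exists b in B, d y b <= D]].

(* Main.v *)
Require Import Defs.
From HB Require Import structures.
From mathcomp Require Import all_boot all_order all_algebra.
From mathcomp Require Import zify ring lra.
Import Order.TTheory GRing.Theory Num.Theory.
Local Open Scope ring_scope.

Lemma card_bigcup_le (T I : finType) (P : {set I}) (F : I -> {set T}) :
  (#|\bigcup_(i in P) F i| <= \sum_(i in P) #|F i|)%N.
Proof.
elim/big_rec2: _ => [|A n U _ leUn]; first by rewrite cards0.
by rewrite (leq_trans (leq_card_setU _ U).1) ?leq_add2l.
Qed.

Lemma cover_count (R : realFieldType) (X Y : finType) (dY : Y -> Y -> R)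
  (psi : X -> Y) (D : R) (S E : {set Y}) :
  S \subset \bigcup_(z in (psi @: [set: X]) :&: S :|: E) cball dY z D ->
  (#|S| <= NY dY D * (#|psi @^-1: S| + #|E|))%N.
Proof.
move=> sub.
apply: (leq_trans (subset_leq_card sub)).
apply: (leq_trans (card_bigcup_le _ _ _ _)).
apply: (leq_trans (n := \sum_(i in (psi @: [set: X]) :&: S :|: E) NY dY D)).
  by apply: leq_sum => i _; rewrite /NY; apply: (leq_bigmax (F := fun y => #|cball dY y D|)).
rewrite sum_nat_const mulnC leq_mul2l; apply/orP; right.
apply: (leq_trans (leq_card_setU _ _).1); rewrite leq_add2r.
have -> : (psi @: [set: X]) :&: S = psi @: (psi @^-1: S).
  apply/setP => y; rewrite !inE; apply/andP/imsetP.
    by case=> /imsetP[x _ ->] Hs; exists x; rewrite ?inE.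
  by case=> x; rewrite inE => Hx ->; split => //; apply: imset_f.
exact: leq_imset_card.
Qed.

Theorem lemma3p17 (R : realFieldType) (X Y : finType)
  (dX : X -> X -> R) (dY : Y -> Y -> R)
  (hX : is_metric dX) (hY : is_metric dY)
  (psi : X -> Y) (D : R) (hD : 0 <= D)
  (hdense : dense_in dY D (psi @: [set: X]))
  (B : {set Y}) (hB0 : B != set0)
  (hBsz : (#|B|%:R : R) <= #|Y|%:R / 2)
  (hexp : 1 - (NY dY D)%:R * (#|oboundary dY D B|%:R / #|B|%:R) >= 1 / 2 :> R) :
  exists A : {set X},
    (A = psi @^-1: B \/ A = psi @^-1: (~: B)) /\
    (#|A|%:R : R) <= #|X|%:R / 2 /\
    (#|A|%:R : R) >= #|B|%:R / (2 * (NY dY D)%:R).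
Proof.
case: hY => _ d0 dsym _.
have dyy : forall y, dY y y = 0 by move=> y; apply/d0.
set E := oboundary dY D B.
set N := NY dY D.
have [b0 b0B] : exists b, b \in B by apply/set0Pn.
have N1 : (1 <= N)%N.
  apply: leq_trans (leq_bigmax (F := fun y => #|cball dY y D|) b0).
  by apply/card_gt0P; exists b0; rewrite inE dyy.
have cB : (#|B| <= N * (#|psi @^-1: B| + #|E|))%N.
  apply: cover_count; apply/subsetP => b bB.
  have [z /imsetP[x _ zx] dbz] := hdense b.
  case: (boolP (z \in B)) => zB.
    apply/bigcupP; exists z; first by rewrite inE; apply/orP; left; rewrite inE zB andbT zx; apply: imset_f; rewrite inE.
    by rewrite inE dsym.
  apply/bigcupP; exists z; last by rewrite inE dsym.
  rewrite !inE; apply/orP; right; rewrite zB /=.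
  by apply/existsP; exists b; rewrite bB dsym.
have cC : (#|~: B| <= N * (#|psi @^-1: (~: B)| + #|E|))%N.
  apply: cover_count; apply/subsetP => c cC.
  have [z /imsetP[x _ zx] dcz] := hdense c.
  case: (boolP (z \in B)) => zB.
    apply/bigcupP; exists c; last by rewrite inE dyy.
    rewrite !inE; apply/orP; right; rewrite -in_setC cC /=.
    by apply/existsP; exists z; rewrite zB.
  apply/bigcupP; exists z; first by rewrite inE; apply/orP; left; rewrite inE; apply/andP; split; [rewrite zx; apply: imset_f; rewrite inE | rewrite inE].
  by rewrite inE dsym.
have bpos : (0 < #|B|)%N by apply/card_gt0P; exists b0.
have Npos : (0 : R) < N%:R by rewrite ltr0n.
have bposR : (0 : R) < #|B|%:R by rewrite ltr0n.
have hE : (N%:R * #|E|%:R : R) <= #|B|%:R / 2.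
  have : N%:R * (#|E|%:R / #|B|%:R) <= 1/2 :> R by lra.
  rewrite mulrA ler_pdivrMr // => h.
  by rewrite ler_pdivlMr //; lra.
have key : forall (S : {set Y}), (#|B| <= #|S|)%N ->
    (#|S| <= N * (#|psi @^-1: S| + #|E|))%N ->
    (#|psi @^-1: S|%:R : R) >= #|B|%:R / (2 * N%:R).
  move=> S hBS hS.
  have hS' : (#|S|%:R : R) <= N%:R * (#|psi @^-1: S|%:R + #|E|%:R).
    by rewrite -natrD -natrM ler_nat.
  have hBS' : (#|B|%:R : R) <= #|S|%:R by rewrite ler_nat.
  rewrite ler_pdivrMr ?mulr_gt0 //.
  nra.
have hC : (#|B| <= #|~: B|)%N.
  have hc := cardsC B.
  have : (#|B|%:R * 2 : R) <= #|Y|%:R by rewrite -ler_pdivlMr //.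
  rewrite -natrM ler_nat => h.
  have := max_card B; lia.
have hsum : (#|psi @^-1: B| + #|psi @^-1: (~: B)| = #|X|)%N.
  by rewrite preimsetC cardsC.
have HB := key B (leqnn _) cB.
have HC := key _ hC cC.
case: (leqP (#|psi @^-1: B| * 2) #|X|) => h.
  exists (psi @^-1: B); split; first by left.
  split => //; rewrite ler_pdivlMr // -natrM ler_nat //.
exists (psi @^-1: (~: B)); split; first by right.
split => //; rewrite ler_pdivlMr // -natrM ler_nat; lia.
Qed.
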